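(* Let $\mathbb{L}=(\mathcal{P},\mathcal{C},\parallel)$ be a Laguerre plane satisfying axiom (C). If $K,L,M$ are circles which are pairwise tangent, then they are all tangent at one and the same point, i.e. there is a point $p$ such that any two of $K,L,M$ are tangent at $p$.
   Context: A Laguerre plane is a triple $(\mathcal{P},\mathcal{C},\parallel)$ where $\mathcal{P}$ is a set of points, $\mathcal{C}\subset 2^{\mathcal{P}}$ a set of circles and $\parallel$ an equivalence relation on $\mathcal{P}$ (parallelism; its classes are called generators) such that: (1) any three pairwise non-parallel points lie on a unique circle; (2) for every circle $K$ and non-parallel points $p\in K$, $q\notin K$ there is exactly one circle $L$ with $q\in L$ and $K\cap L=\{p\}$; (3) for every point $p$ and circle $K$ there is exactly one point $q\in K$ with $q\parallel p$; (4) some circle contains at least three but not all points. Circles $K,L$ are tangent at $p$ if $K\cap L=\{p\}$ or $K=L$ (with $p\in K$); $K,L$ are tangent if they are tangent at some point. For $p\in K$, $\langle p,K\rangle$ denotes the set of circles tangent to $K$ at $p$. Axiom (C): for any circles $K,L$ and any point $p\in K\setminus L$ there exists exactly one circle $M\in\langle p,K\rangle$ with $|M\cap L|=1$. *)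

(* Defs.v *)
From Stdlib Require Import RelationClasses.

(* Equality of circles is Leibniz
   equality of predicates (= set equality under extensionality). *)

Definition tangent_at {P : Type} (K L : P -> Prop) (p : P) : Prop :=
  (forall x, (K x /\ L x) <-> x = p) \/ (K = L /\ K p).

Definition tangent {P : Type} (K L : P -> Prop) : Prop :=
  exists p, tangent_at K L p.

Record laguerre_plane (P : Type) (circle : (P -> Prop) -> Prop)
    (par : P -> P -> Prop) : Prop := {
  lp_equiv : Equivalence par;
  lp_ax1 : forall p q r, ~ par p q -> ~ par p r -> ~ par q r ->
      exists K, (circle K /\ K p /\ K q /\ K r) /\
        forall K', circle K' /\ K' p /\ K' q /\ K' r -> K' = K;
  lp_ax2 : forall (K : P -> Prop) p q, circle K -> K p -> ~ K q -> ~ par p q ->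
      exists L, (circle L /\ L q /\ (forall x, (K x /\ L x) <-> x = p)) /\
        forall L', circle L' /\ L' q /\ (forall x, (K x /\ L' x) <-> x = p) ->
          L' = L;
  lp_ax3 : forall p (K : P -> Prop), circle K ->
      exists q, (K q /\ par q p) /\ forall q', K q' /\ par q' p -> q' = q;
  lp_ax4 : exists K, circle K /\
      (exists a b c, K a /\ K b /\ K c /\ a <> b /\ a <> c /\ b <> c) /\
      (exists x, ~ K x)
}.

Definition axiom_C (P : Type) (circle : (P -> Prop) -> Prop) : Prop :=
  forall (K L : P -> Prop) p, circle K -> circle L -> K p -> ~ L p ->
    exists M, (circle M /\ tangent_at K M p /\
                 exists y, forall x, (M x /\ L x) <-> x = y) /\
      forall M', circle M' /\ tangent_at K M' p /\
                 (exists y, forall x, (M' x /\ L x) <-> x = y) -> M' = M.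

(* Main.v *)
Require Import Defs.
From Stdlib Require Import Classical.

Lemma tat_in {P : Type} (K L : P -> Prop) p : tangent_at K L p -> K p /\ L p.
Proof.
  intros [H|[<- H]]; [apply H; reflexivity| auto].
Qed.

Lemma tat_sym {P : Type} (K L : P -> Prop) p : tangent_at K L p -> tangent_at L K p.
Proof.
  intros [H|[<- H]]; [left; intro x; rewrite <- (H x); tauto | right; auto].
Qed.

Theorem proposition2p1 (P : Type) (circle : (P -> Prop) -> Prop)
    (par : P -> P -> Prop) :
  laguerre_plane P circle par -> axiom_C P circle ->
  forall K L M : P -> Prop, circle K -> circle L -> circle M ->
    tangent K L -> tangent L M -> tangent K M ->
    exists p, tangent_at K L p /\ tangent_at L M p /\ tangent_at K M p.
Proof.
  intros _ HC K L M cK cL cM [p1 t1] [p2 t2] [p3 t3].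
  destruct t1 as [h1|[e1 k1]].
  2:{ subst L. exists p3. destruct (tat_in _ _ _ t3) as [a b].
      split; [right; auto| split; auto]. }
  destruct t2 as [h2|[e2 k2]].
  2:{ subst M. exists p1. destruct (proj2 (h1 p1) eq_refl) as [a b].
      split; [left; auto| split; [right; auto | left; auto]]. }
  destruct t3 as [h3|[e3 k3]].
  2:{ subst M. exists p1. destruct (proj2 (h1 p1) eq_refl) as [a b].
      split; [left; auto| split; [apply tat_sym; left; auto | right; auto]]. }
  destruct (proj2 (h1 p1) eq_refl) as [Kp1 Lp1].
  destruct (classic (M p1)) as [Mp1|nM].
  - assert (p1 = p3) by (apply h3; auto).
    assert (p1 = p2) by (apply h2; auto).
    subst. eexists. split; [left; auto| split; left; auto].
  - destruct (HC K M p1 cK cM Kp1 nM) as [M0 [_ U]].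
    assert (EL : L = M0).
    { apply U. split; [auto| split; [left; auto| exists p2; auto]]. }
    assert (EK : K = M0).
    { apply U. split; [auto| split; [right; auto| exists p3; auto]]. }
    rewrite <- EK in EL. subst L.
    destruct (proj2 (h3 p3) eq_refl) as [Kp3 Mp3].
    assert (p3 = p1) by (apply h1; auto). subst. contradiction.
Qed.
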